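(* The following two statements are equivalent: (A) for every $n\ge 1$, every antipodal $2$-colouring of $E(Q_n)$ contains a monochromatic geodesic between some pair of antipodal vertices; (B) for every $n\ge 1$, in every $2$-colouring of $E(Q_n)$ there is a geodesic between some pair of antipodal vertices which changes colour at most once.
   Context: The hypercube $Q_n$ has vertex set $\{0,1\}^n$, two vertices adjacent iff they differ in exactly one coordinate; the direction of an edge is that coordinate. A path is a geodesic if no two of its edges have the same direction. The antipodal vertex $x'$ of $x$ is the vertex differing from $x$ in every coordinate; the antipodal edge of $e=xy$ is $x'y'$. A $2$-colouring of $E(Q_n)$ is antipodal if no two antipodal edges receive the same colour. A path changes colour at most once if its edge sequence consists of an (possibly empty) initial segment of one colour followed by a segment of the other colour. *)

(* Defs.v *)
From mathcomp Require Import all_boot.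
Set Implicit Arguments. Unset Strict Implicit. Unset Printing Implicit Defensive.

Definition vert (n : nat) := {ffun 'I_n -> bool}.

Definition flip n (x : vert n) (i : 'I_n) : vert n :=
  [ffun j => if j == i then ~~ x j else x j].

Definition antip n (x : vert n) : vert n := [ffun j => ~~ x j].

(* A 2-colouring of E(Q_n): the edge {x, flip x i} (direction i) is encoded
   by the pair (x, i); c x i is its colour.  Well-definedness: both
   encodings of the same edge receive the same colour. *)
Definition edge_colouring n (c : vert n -> 'I_n -> bool) : Prop :=
  forall x i, c (flip x i) i = c x i.

(* antipodal colouring: the antipodal edge x'y' of xy = {x, flip x i}
   is {antip x, flip (antip x) i}; they get different colours. *)
Definition antipodal_colouring n (c : vert n -> 'I_n -> bool) : Prop :=
  forall x i, c (antip x) i != c x i.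

(* A path starting at x is given by its sequence of edge directions ds;
   its end vertex and its edge colour sequence: *)
Definition path_end n (x : vert n) (ds : seq 'I_n) : vert n :=
  foldl (@flip n) x ds.

Fixpoint path_colours n (c : vert n -> 'I_n -> bool) (x : vert n)
    (ds : seq 'I_n) : seq bool :=
  match ds with
  | [::] => [::]
  | d :: ds' => c x d :: path_colours c (flip x d) ds'
  end.

Definition geodesic n (ds : seq 'I_n) : bool := uniq ds.

Definition monochromatic (s : seq bool) : Prop :=
  exists b, all (eq_op^~ b) s.

Definition changes_at_most_once (s : seq bool) : Prop :=
  exists (b : bool) (k : nat),
    all (eq_op^~ b) (take k s) /\ all (eq_op^~ (~~ b)) (drop k s).

(* Main.v *)
Require Import Defs.
From mathcomp Require Import all_boot.
Set Implicit Arguments. Unset Strict Implicit. Unset Printing Implicit Defensive.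

Lemma path_end_cons n (x : vert n) d s : path_end x (d :: s) = path_end (flip x d) s.
Proof. by []. Qed.

Lemma path_end_cat n (x : vert n) s1 s2 :
  path_end x (s1 ++ s2) = path_end (path_end x s1) s2.
Proof. by rewrite /path_end foldl_cat. Qed.

Lemma path_colours_cat n c (x : vert n) s1 s2 :
  path_colours c x (s1 ++ s2) = path_colours c x s1 ++ path_colours c (path_end x s1) s2.
Proof. by elim: s1 x => [|d s IH] x //=; rewrite IH. Qed.

Lemma size_path_colours n c (x : vert n) s : size (path_colours c x s) = size s.
Proof. by elim: s x => [|d s IH] x //=; rewrite IH. Qed.

Lemma antip_flip n (x : vert n) i : antip (flip x i) = flip (antip x) i.
Proof. by apply/ffunP => j; rewrite !ffunE; case: eqP. Qed.

Lemma antipK n (x : vert n) : antip (antip x) = x.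
Proof. by apply/ffunP => j; rewrite !ffunE negbK. Qed.

Lemma path_end_antip n (x : vert n) s : path_end (antip x) s = antip (path_end x s).
Proof. by elim: s x => [|d s IH] x //; rewrite !path_end_cons -antip_flip IH. Qed.

Lemma path_colours_antip n c (x : vert n) s : antipodal_colouring c ->
  path_colours c (antip x) s = map negb (path_colours c x s).
Proof.
move=> Ha; elim: s x => [|d s IH] x //=.
rewrite -antip_flip IH; congr (_ :: _).
by move: (Ha x d); case: (c (antip x) d); case: (c x d).
Qed.

Lemma take_drop_pc n c (x : vert n) ds k :
  take k (path_colours c x ds) = path_colours c x (take k ds) /\
  drop k (path_colours c x ds) = path_colours c (path_end x (take k ds)) (drop k ds).
Proof.
elim: ds x k => [|d s IH] x [|k] //=.
by case: (IH (flip x d) k) => -> ->.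
Qed.

Lemma all_negb (b : bool) s : all (eq_op^~ b) (map negb s) = all (eq_op^~ (~~ b)) s.
Proof. by rewrite all_map; apply: eq_all => a /=; case: a; case: b. Qed.

Lemma BtoA :
  (forall n : nat, 0 < n -> forall c : vert n -> 'I_n -> bool,
     edge_colouring c ->
     exists (x : vert n) (ds : seq 'I_n),
       [/\ geodesic ds, path_end x ds = antip x &
           changes_at_most_once (path_colours c x ds)]) ->
  (forall n : nat, 0 < n -> forall c : vert n -> 'I_n -> bool,
     edge_colouring c -> antipodal_colouring c ->
     exists (x : vert n) (ds : seq 'I_n),
       [/\ geodesic ds, path_end x ds = antip x &
           monochromatic (path_colours c x ds)]).
Proof.
move=> HB n n0 c Hc Ha.
have [x [ds [Hg He [b [k [H1 H2]]]]]] := HB n n0 c Hc.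
case: (take_drop_pc c x ds k) => Et Ed.
rewrite Et in H1; rewrite Ed in H2.
set y := path_end x (take k ds) in H2.
have Hy : path_end y (drop k ds) = antip x by rewrite /y -path_end_cat cat_take_drop.
exists y, (drop k ds ++ take k ds); split.
- by rewrite /geodesic uniq_catC cat_take_drop.
- by rewrite path_end_cat Hy path_end_antip.
- exists (~~ b); rewrite path_colours_cat all_cat H2 Hy path_colours_antip //.
  by rewrite all_negb negbK.
Qed.

Set Implicit Arguments. Unset Strict Implicit. Unset Printing Implicit Defensive.

Definition proj n (x : vert n.+1) : vert n := [ffun j => x (lift ord_max j)].

Definition ext n (c : vert n -> 'I_n -> bool) (f : vert n -> bool)
  (x : vert n.+1) (i : 'I_n.+1) : bool :=
  match unlift ord_max i with
  | Some j => if x ord_max then ~~ c (antip (proj x)) j else c (proj x) j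
  | None => f (proj x)
  end.

Lemma flip_lift_max n (x : vert n.+1) j : flip x (lift ord_max j) ord_max = x ord_max.
Proof. by rewrite ffunE (negbTE (neq_lift _ _)). Qed.

Lemma proj_flip_lift n (x : vert n.+1) j : proj (flip x (lift ord_max j)) = flip (proj x) j.
Proof. by apply/ffunP => k; rewrite !ffunE (inj_eq lift_inj). Qed.

Lemma flip_max_max n (x : vert n.+1) : flip x ord_max ord_max = ~~ x ord_max.
Proof. by rewrite ffunE eqxx. Qed.

Lemma proj_flip_max n (x : vert n.+1) : proj (flip x ord_max) = proj x.
Proof. by apply/ffunP => k; rewrite !ffunE eq_sym (negbTE (neq_lift _ _)). Qed.

Lemma proj_antip n (x : vert n.+1) : proj (antip x) = antip (proj x).
Proof. by apply/ffunP => k; rewrite !ffunE. Qed.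

Lemma antip_max n (x : vert n.+1) : antip x ord_max = ~~ x ord_max.
Proof. by rewrite ffunE. Qed.

Lemma pe_layer n (x : vert n.+1) t :
  path_end x (map (lift ord_max) t) ord_max = x ord_max /\
  proj (path_end x (map (lift ord_max) t)) = path_end (proj x) t.
Proof.
elim: t x => [|d t IH] x //.
rewrite !path_end_cons; case: (IH (flip x (lift ord_max d))) => -> ->.
by rewrite flip_lift_max proj_flip_lift.
Qed.

Lemma pc_layer n c f (x : vert n.+1) t :
  path_colours (ext c f) x (map (lift ord_max) t) =
  if x ord_max then map negb (path_colours c (antip (proj x)) t)
  else path_colours c (proj x) t.
Proof.
elim: t x => [|d t IH] x /=; first by case: (x ord_max).
rewrite IH flip_lift_max proj_flip_lift antip_flip /ext liftK.
by case: (x ord_max).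
Qed.

Lemma avoid_max n (s : seq 'I_n.+1) : ord_max \notin s ->
  exists t, s = map (lift ord_max) t.
Proof.
elim: s => [|i s IH]; first by exists [::].
rewrite in_cons negb_or => /andP [Hi /IH [t ->]].
case: (unliftP ord_max i) Hi => [j ->|->] Hi; last by rewrite eqxx in Hi.
by exists (j :: t).
Qed.

Lemma AtoB :
  (forall n : nat, 0 < n -> forall c : vert n -> 'I_n -> bool,
     edge_colouring c -> antipodal_colouring c ->
     exists (x : vert n) (ds : seq 'I_n),
       [/\ geodesic ds, path_end x ds = antip x &
           monochromatic (path_colours c x ds)]) ->
  (forall n : nat, 0 < n -> forall c : vert n -> 'I_n -> bool,
     edge_colouring c ->
     exists (x : vert n) (ds : seq 'I_n),
       [/\ geodesic ds, path_end x ds = antip x &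
           changes_at_most_once (path_colours c x ds)]).
Proof.
move=> HA n n0 c Hc.
pose f (v : vert n) := v (Ordinal n0).
have Hf : forall v, f (antip v) = ~~ f v by move=> v; rewrite /f ffunE.
have Hc' : edge_colouring (ext c f).
  move=> x i; rewrite /ext; case: (unliftP ord_max i) => [j ->|->].
    rewrite flip_lift_max proj_flip_lift antip_flip !Hc.
    by case: (x ord_max).
  by rewrite proj_flip_max.
have Ha' : antipodal_colouring (ext c f).
  move=> x i; rewrite /ext; case: (unlift ord_max i) => [j|].
    rewrite antip_max proj_antip antipK.
    by case: (x ord_max) => /=; case: (c (proj x) j); case: (c (antip (proj x)) j).
  by rewrite proj_antip Hf; case: (f _).
have [x [ds [Hg He [b Hm]]]] := HA n.+1 (ltn0Sn n) (ext c f) Hc' Ha'.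
have Hin : ord_max \in ds.
  apply/negP => /negP /avoid_max [t Et].
  case: (pe_layer x t) => H1 _.
  by move: H1; rewrite -Et He antip_max; case: (x ord_max).
case/splitPr: Hin Hg He Hm => s1 s2.
rewrite /geodesic cat_uniq /= => /and3P [Hu1 /norP [Hm1 Hn] /andP [Hm2 Hu2]].
have [t1 E1] := avoid_max Hm1; have [t2 E2] := avoid_max Hm2; subst s1 s2.
rewrite path_end_cat path_end_cons path_colours_cat /= all_cat /=.
set y := path_end x (map (lift ord_max) t1).
set z := flip y ord_max.
case: (pe_layer x t1) => Hy1 Hy2; fold y in Hy1, Hy2.
case: (pe_layer z t2) => Hz1 Hz2.
have Hz1' : z ord_max = ~~ x ord_max by rewrite /z flip_max_max Hy1.
have Hz2' : proj z = path_end (proj x) t1 by rewrite /z proj_flip_max Hy2.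
move=> He /and3P [Hb1 _ Hb2].
have He2 : path_end (proj z) t2 = antip (proj x) by rewrite -Hz2 He proj_antip.
rewrite !pc_layer Hz1' in Hb1 Hb2.
have Hu : uniq (t2 ++ t1).
  rewrite uniq_catC -(map_inj_uniq (@lift_inj _ ord_max)) map_cat cat_uniq Hu1 Hu2 /= andbT.
  exact: Hn.
move: Hb1 Hb2; case: (x ord_max) => /= Hb1 Hb2.
- rewrite all_negb in Hb1.
  exists (proj z), (t2 ++ t1); split => //.
  + by rewrite path_end_cat He2 path_end_antip Hz2'.
  + exists b, (size t2).
    rewrite path_colours_cat take_size_cat ?size_path_colours //.
    rewrite drop_size_cat ?size_path_colours // Hb2 He2 //.
- rewrite all_negb in Hb2.
  exists (antip (proj z)), (t2 ++ t1); split => //.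
  + by rewrite path_end_cat path_end_antip He2 !antipK Hz2'.
  + exists (~~ b), (size t2).
    rewrite path_colours_cat take_size_cat ?size_path_colours //.
    rewrite drop_size_cat ?size_path_colours // Hb2 path_end_antip He2 antipK negbK //.
Qed.

Theorem proposition13 :
  (forall n : nat, 0 < n -> forall c : vert n -> 'I_n -> bool,
     edge_colouring c -> antipodal_colouring c ->
     exists (x : vert n) (ds : seq 'I_n),
       [/\ geodesic ds, path_end x ds = antip x &
           monochromatic (path_colours c x ds)])
  <->
  (forall n : nat, 0 < n -> forall c : vert n -> 'I_n -> bool,
     edge_colouring c ->
     exists (x : vert n) (ds : seq 'I_n),
       [/\ geodesic ds, path_end x ds = antip x &
           changes_at_most_once (path_colours c x ds)]).
Proof. split; [exact: AtoB | exact: BtoA]. Qed.
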